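(* Fix $\theta>1$ and an integer $k\ge1$. Then $$\lim_{N\to\infty}\frac{W(N,k)}{[N]_\theta!}=(\theta-1)\,\frac{\theta^k-1}{\theta^{k+1}}\sum_{i=k}^{\infty}\frac{1}{\theta^i-1},$$ where the series converges and the limit $L(k)$ is positive. Moreover, $L(k)\to0$ as $k\to\infty$, so $\max_{k\ge1}L(k)$ is attained at some finite $k$ that depends only on $\theta$.
   Context: Permutations of $\{1,\dots,N\}$ are written in one-line notation; $\mathfrak S_N$ is the set of all of them. An entry $\pi_j$ is a left-to-right maximum if $\pi_j>\pi_i$ for all $i<j$; $\mathrm{inv}(\pi)$ is the number of pairs $i<j$ with $\pi_i>\pi_j$. Definitions: - $[m]_\theta=1+\theta+\cdots+\theta^{m-1}$ and $[m]_\theta!=[1]_\theta\cdots[m]_\theta$; note $[N]_\theta!=\sum_{\pi\in\mathfrak S_N}\theta^{\mathrm{inv}(\pi)}$. - For $0\le k\le N-1$, $\pi\in\mathfrak S_N$ is $k$-winnable if the first index $j>k$ with $\pi_j$ a left-to-right maximum has $\pi_j=N$. - $W(N,k)=\sum_{k\text{-winnable }\pi}\theta^{\mathrm{inv}(\pi)}$. - $L(k)$ denotes the limit in the claim. $W(N,k)/[N]_\theta!$ is the winning probability, under the Mallows distribution (probability of $\pi$ proportional to $\theta^{\mathrm{inv}(\pi)}$), of the positional strategy that rejects the first $k$ candidates and accepts the next left-to-right maximum. *)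

(* Defs.v *)
From Stdlib Require Import Reals.
From mathcomp Require Import all_boot.
From mathcomp Require Import perm.

Set Implicit Arguments.
Unset Strict Implicit.
Unset Printing Implicit Defensive.

(* Permutations of {1,...,N} are modelled as s : {perm 'I_N}, i.e. permutations
   of {0,...,N-1}; position j (0-based) holds the value s j (0-based).
   Thus 1-based pi_(j+1) = s j + 1, and the maximal value N corresponds to N-1. *)

Definition ltrmax (N : nat) (s : {perm 'I_N}) (j : 'I_N) : bool :=
  [forall i : 'I_N, (i < j)%N ==> (s i < s j)%N].

Definition inv (N : nat) (s : {perm 'I_N}) : nat :=
  #|[set p : 'I_N * 'I_N | (p.1 < p.2)%N && (s p.2 < s p.1)%N]|.

(* k-winnable: the first 1-based index j > k (i.e. 0-based index j >= k) at which
   a left-to-right maximum occurs carries the value N (0-based: N-1). *)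
Definition winnable (N k : nat) (s : {perm 'I_N}) : bool :=
  [exists j : 'I_N,
     [&& (k <= j)%N, ltrmax s j, (val (s j) == N.-1)
       & [forall j' : 'I_N, ((k <= j')%N && (j' < j)%N) ==> ~~ ltrmax s j']]].

Definition W (N k : nat) (theta : R) : R :=
  \big[Rplus/R0]_(s | @winnable N k s) pow theta (inv s).

Definition qint (m : nat) (theta : R) : R :=
  \big[Rplus/R0]_(i < m) pow theta i.

Definition qfact (N : nat) (theta : R) : R :=
  \big[Rmult/R1]_(1 <= m < N.+1) qint m theta.

Definition winprob (N k : nat) (theta : R) : R :=
  Rdiv (W N k theta) (qfact N theta).

(* Main.v *)
Require Import Defs.
From Stdlib Require Import Reals Lra Lia.

Module Comb.
From HB Require Import structures.
From mathcomp Require Import all_boot perm zify.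
Set Implicit Arguments.
Unset Strict Implicit.
Unset Printing Implicit Defensive.

HB.instance Definition _ := Monoid.isComLaw.Build R R0 Rplus (fun a b c => esym (Rplus_assoc a b c)) Rplus_comm Rplus_0_l.
HB.instance Definition _ := Monoid.isComLaw.Build R R1 Rmult (fun a b c => esym (Rmult_assoc a b c)) Rmult_comm Rmult_1_l.

Lemma sum_split_max (N : nat) (F : 'I_N.+1 -> R) :
  \big[Rplus/R0]_(i : 'I_N.+1) F i =
  Rplus (\big[Rplus/R0]_(j : 'I_N) F (lift ord_max j)) (F ord_max).
Proof.
rewrite big_ord_recr /=; congr Rplus; apply: eq_bigr => j _; congr F.
by apply: val_inj; rewrite /= /bump leqNgt ltn_ord.
Qed.

Lemma nsum_split_max (N : nat) (F : 'I_N.+1 -> nat) :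
  \sum_(i : 'I_N.+1) F i = \sum_(j : 'I_N) F (lift ord_max j) + F ord_max.
Proof.
rewrite big_ord_recr /=; congr addn; apply: eq_bigr => j _; congr F.
by apply: val_inj; rewrite /= /bump leqNgt ltn_ord.
Qed.

Lemma forall_split_max (N : nat) (P : 'I_N.+1 -> bool) :
  [forall i, P i] = P ord_max && [forall j : 'I_N, P (lift ord_max j)].
Proof.
apply/forallP/andP => [H | [H1 /forallP H2] i]; first by split => //; apply/forallP.
by case: (unliftP ord_max i) => [j|] ->.
Qed.

Lemma exists_split_max (N : nat) (P : 'I_N.+1 -> bool) :
  [exists i, P i] = P ord_max || [exists j : 'I_N, P (lift ord_max j)].
Proof.
apply/existsP/orP => [[i] | [H | /existsP [j H]]].
- by case: (unliftP ord_max i) => [j|] -> H; [right; apply/existsP; exists j | left].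
- by exists ord_max.
- by exists (lift ord_max j).
Qed.

Lemma sum_decomp N (P : {perm 'I_N.+1} -> bool) (F : {perm 'I_N.+1} -> R) :
  \big[Rplus/R0]_(s | P s) F s =
  \big[Rplus/R0]_(v : 'I_N.+1) \big[Rplus/R0]_(s' : {perm 'I_N} | P (lift_perm ord_max v s'))
      F (lift_perm ord_max v s').
Proof.
rewrite (partition_big (fun s : {perm 'I_N.+1} => s ord_max) predT) //=.
apply: eq_bigr => v _.
rewrite (reindex (lift_perm ord_max v)); last first.
  pose i := (ord_max : 'I_N.+1).
  pose ulsf (s : {perm 'I_N.+1}) k := odflt k (unlift (s i) (s (lift i k))).
  have ulsfK (s : {perm 'I_N.+1}) k: lift (s i) (ulsf s k) = s (lift i k).
    rewrite /ulsf; have:= neq_lift i k.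
    by rewrite -(can_eq (permK s)) => /unlift_some[] ? ? ->.
  have inj_ulsf: forall s, injective (ulsf s).
    move=> s; apply: (can_inj (g := fun k => odflt k (unlift i ((s^-1)%g (lift (s i) k))))) => k'.
    by rewrite ulsfK !permK liftK.
  exists (fun s => perm (inj_ulsf s)) => [s _ | s].
    by apply/permP=> k'; rewrite permE /ulsf lift_perm_lift lift_perm_id liftK.
  move/andP => [_ /eqP si0]; apply/permP=> k.
  case: (unliftP i k) => [k'|] ->; rewrite ?lift_perm_id //.
  by rewrite lift_perm_lift -si0 permE ulsfK.
by apply: eq_bigl => s; rewrite lift_perm_id eqxx andbT.
Qed.


Lemma ltn_lift2 n (h : 'I_n.+1) (a b : 'I_n) : (lift h a < lift h b) = (a < b).
Proof. by rewrite /= /bump; case: (leqP h a); case: (leqP h b) => /=; lia. Qed.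

Lemma liftv N (j : 'I_N) : val (lift (ord_max : 'I_N.+1) j) = val j.
Proof. by rewrite /= /bump leqNgt ltn_ord. Qed.

Section Lift.
Variables (N : nat) (v : 'I_N.+1) (s : {perm 'I_N}).
Let t := lift_perm ord_max v s.

Lemma ltrmax_lift (j : 'I_N) : ltrmax t (lift ord_max j) = ltrmax s j.
Proof.
rewrite /ltrmax forall_split_max liftv /=.
rewrite (leqNgt N.+1) ltnS (ltnW (ltn_ord j)) /=.
apply: eq_forallb => i; rewrite /t !lift_perm_lift ltn_lift2 /bump; have := ltn_ord i; case: leqP => //; lia.
Qed.

Lemma ltrmax_max : ltrmax t ord_max = (v == ord_max).
Proof.
rewrite /ltrmax /t lift_perm_id; apply/forallP/eqP => [H | ->] .
  apply/eqP; apply: contraT => Hv.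
  pose i := ((t^-1)%g ord_max).
  have ti : t i = ord_max by rewrite /i permKV.
  have Hi : i != ord_max.
    apply/eqP => E; move: ti; rewrite E /t lift_perm_id => E2.
    by rewrite E2 eqxx in Hv.
  have := H i; rewrite ti.
  case: (unliftP ord_max i) Hi => [j|] -> Hi'; last by rewrite eqxx in Hi'.
  have Hj : (j < N)%N := ltn_ord j.
  rewrite /= /bump (negbTE (_ : ~~ (N <= j))) ?add0n; last by rewrite -ltnNge.
  move/implyP=> H2; have := H2 Hj.
  have := ltn_ord v; lia.
move=> i; case: (unliftP ord_max i) => [j|] ->; rewrite ?ltnn //=.
rewrite lift_perm_lift /= /bump /=; apply/implyP => _.
have := ltn_ord (s j); lia.
Qed.
End Lift.


Definition nolm (N k : nat) (s : {perm 'I_N}) : bool :=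
  [forall j : 'I_N, (k <= j) ==> ~~ ltrmax s j].

Lemma card_pairs n (P : 'I_n -> 'I_n -> bool) :
  #|[set p : 'I_n * 'I_n | P p.1 p.2]| = \sum_(i : 'I_n) \sum_(j : 'I_n) (P i j : nat).
Proof.
rewrite -sum1_card pair_big /= big_mkcond /=; apply: eq_bigr => p _.
by rewrite inE; case: (P _ _).
Qed.

Lemma count_ge n m : \sum_(x < n) (m <= x : nat) = n - m.
Proof.
elim: n => [|n IH]; first by rewrite big_ord0.
rewrite big_ord_recr /= IH; case: (leqP m n) => H /=; lia.
Qed.

Lemma liftn N (j : 'I_N) : nat_of_ord (lift (ord_max : 'I_N.+1) j) = nat_of_ord j.
Proof. by rewrite /= /bump leqNgt ltn_ord. Qed.

Section Lift2.
Variables (N : nat) (v : 'I_N.+1) (s : {perm 'I_N}).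
Let t := lift_perm ord_max v s.

Lemma neq_max_lt : (v != ord_max) = (v < N).
Proof. by rewrite -val_eqE /=; have := ltn_ord v; case: (eqVneq (val v) N) => /=; lia. Qed.

Lemma val_lift_eq (j : 'I_N) :
  (val (t (lift ord_max j)) == N) = (val (s j) == N.-1) && (v != ord_max).
Proof.
rewrite /t lift_perm_lift neq_max_lt /= /bump.
have := ltn_ord (s j); have := ltn_ord v.
move=> H3 H4; case: (leqP v (s j)) => H1 /=; case: (eqVneq (nat_of_ord (s j)) N.-1) => H2 /=; try (apply/eqP/idP => H); try (apply/eqP); lia.
Qed.

Lemma winnable_lift k :
  winnable k t = if v == ord_max then (k <= N) && nolm k s else winnable k s.
Proof.
rewrite /winnable exists_split_max ltrmax_max.
have E1 : forall jj : 'I_N, [forall j' : 'I_N.+1, (k <= j') && (j' < jj) ==> ~~ ltrmax t j']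
   = [forall j' : 'I_N, (k <= j') && (j' < jj) ==> ~~ ltrmax s j'].
  move=> jj; rewrite forall_split_max.
  have -> : ((ord_max : 'I_N.+1) < jj)%N = false by rewrite ltnNge /= (ltnW (ltn_ord jj)).
  rewrite andbF /=.
  apply: eq_forallb => j; have Hj : (j < N)%N := ltn_ord j; rewrite /bump (leqNgt N) Hj add0n ltrmax_lift //.
under eq_existsb => jj do rewrite (liftn jj) ltrmax_lift val_lift_eq E1.
case: (eqVneq v ord_max) => Hv.
  under eq_existsb => x do rewrite andbF andFb andbF andbF.
  have -> : [exists x : 'I_N, false] = false by apply/existsP => -[].
  rewrite orbF /t lift_perm_id Hv eqxx /=.
  rewrite forall_split_max.
  have -> : ((ord_max : 'I_N.+1) < N)%N = false by rewrite /= ltnn.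
  rewrite andbF /= /nolm; congr (_ && _); apply: eq_forallb => j'.
  have Hj : (j' < N)%N := ltn_ord j'; rewrite /bump (leqNgt N) Hj add0n Hj andbT ltrmax_lift //.
rewrite andFb andbF orFb; apply: eq_existsb => x; by rewrite andbT.
Qed.

Lemma nolm_lift k : k <= N -> nolm k t = (v != ord_max) && nolm k s.
Proof.
move=> Hk; rewrite /nolm forall_split_max ltrmax_max.
have E : (k <= (ord_max:'I_N.+1))%N = true by exact Hk.
rewrite E /=; congr (_ && _); apply: eq_forallb => j.
have Hj : (j < N)%N := ltn_ord j; rewrite /bump (leqNgt N) Hj add0n ltrmax_lift //.
Qed.

Lemma inv_lift : Defs.inv t = Defs.inv s + (N - v).
Proof.
rewrite /Defs.inv (card_pairs (fun i j => (i < j) && (t j < t i))) (card_pairs (fun i j => (i < j) && (s j < s i))) nsum_split_max.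
rewrite [X in _ + X]big1 ?addn0; last first.
  by move=> j _; have := ltn_ord j; case: ltnP => //=; lia.
have Hc : N - v = \sum_(i : 'I_N) (v <= s i : nat).
  by rewrite -count_ge (reindex_inj (@perm_inj _ s)).
rewrite Hc -big_split.
apply: eq_bigr => i _; rewrite nsum_split_max; congr addn.
  apply: eq_bigr => j _; rewrite (liftn i) (liftn j) /t !lift_perm_lift ltn_lift2 //.
rewrite (liftn i) /t lift_perm_id lift_perm_lift /= /bump.
have := ltn_ord i; have := ltn_ord (s i); have := ltn_ord v.
by case: (leqP v (s i)) => /=; lia.
Qed.
End Lift2.


Lemma Rsum_mulr (I : finType) (P : pred I) (F : I -> R) c :
  \big[Rplus/R0]_(i | P i) (Rmult (F i) c) = Rmult (\big[Rplus/R0]_(i | P i) F i) c.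
Proof.
apply: (big_rec2 (fun a b => a = Rmult b c)); first by rewrite Rmult_0_l.
by move=> i a b _ ->; rewrite Rmult_plus_distr_r.
Qed.

Section Rec.
Variable theta : R.

Definition Fs N := \big[Rplus/R0]_(s : {perm 'I_N}) pow theta (Defs.inv s).
Definition Zs N k := \big[Rplus/R0]_(s : {perm 'I_N} | nolm k s) pow theta (Defs.inv s).

Lemma sum_pow N : \big[Rplus/R0]_(v : 'I_N.+1) pow theta (N - v) = qint N.+1 theta.
Proof.
rewrite /qint (reindex_inj rev_ord_inj); apply: eq_bigr => v _; congr pow.
rewrite /=; have := ltn_ord v; lia.
Qed.

Lemma sum_pow' N : \big[Rplus/R0]_(j : 'I_N) pow theta (N - lift ord_max j) = Rminus (qint N.+1 theta) R1.
Proof.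
rewrite -sum_pow sum_split_max /= subnn /=; ring.
Qed.

Lemma Fs_rec N : Fs N.+1 = Rmult (qint N.+1 theta) (Fs N).
Proof.
rewrite /Fs (sum_decomp predT) -sum_pow -Rsum_mulr.
apply: eq_bigr => v _; rewrite Rmult_comm -Rsum_mulr; apply: eq_bigr => s _.
by rewrite inv_lift pow_add.
Qed.

Lemma Zs_rec N k : (k <= N)%N -> Zs N.+1 k = Rmult (Rminus (qint N.+1 theta) R1) (Zs N k).
Proof.
move=> Hk; rewrite /Zs (sum_decomp (fun s => nolm k s)) sum_split_max.
rewrite [X in Rplus _ X]big_pred0; last by move=> s; rewrite nolm_lift // eqxx.
rewrite Rplus_0_r -sum_pow' -Rsum_mulr.
apply: eq_bigr => j _; rewrite Rmult_comm -Rsum_mulr; apply: eq_big => s.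
  by rewrite nolm_lift // eq_sym neq_lift.
by move=> _; rewrite inv_lift pow_add.
Qed.
Lemma W_rec N k : (k <= N)%N ->
  W N.+1 k theta = Rplus (Rmult (Rminus (qint N.+1 theta) R1) (W N k theta)) (Zs N k).
Proof.
move=> Hk; rewrite /W (sum_decomp (fun s => winnable k s)) sum_split_max.
congr Rplus.
  rewrite -sum_pow' -Rsum_mulr.
  apply: eq_bigr => j _; rewrite Rmult_comm -Rsum_mulr; apply: eq_big => s.
    by rewrite winnable_lift // eq_sym (negbTE (neq_lift _ _)).
  by move=> _; rewrite inv_lift pow_add.
rewrite /Zs; apply: eq_big => s.
  by rewrite winnable_lift eqxx Hk.
by move=> _; rewrite inv_lift subnn addn0 /=; ring.
Qed.

Lemma W_base k : W k k theta = R0.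
Proof.
rewrite /W big_pred0 // => s; apply/existsP => -[j /and4P [H _ _ _]].
by have := ltn_ord j; lia.
Qed.

Lemma Zs_base k : Zs k k = Fs k.
Proof.
rewrite /Zs /Fs; apply: eq_bigl => s; apply/forallP => j.
by rewrite leqNgt ltn_ord.
Qed.

Lemma Fs0 : Fs 0 = R1.
Proof.
rewrite /Fs (big_pred1 (1%g : {perm 'I_0})); last by move=> s; symmetry; apply/eqP/permP => -[].
by rewrite /Defs.inv eq_card0 // => -[[]].
Qed.

Lemma Fs_qfact N : Fs N = qfact N theta.
Proof.
elim: N => [|N IH]; first by rewrite Fs0 /qfact big_geq.
rewrite Fs_rec IH /qfact [RHS]big_nat_recr //= Rmult_comm //.
Qed.

Lemma qint_closed m : Rmult (Rminus theta R1) (qint m theta) = Rminus (pow theta m) R1.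
Proof.
elim: m => [|m IH]; first by rewrite /qint big_ord0 /=; ring.
rewrite /qint big_ord_recr /= -/(qint m theta) Rmult_plus_distr_l IH; ring.
Qed.
End Rec.

Local Open Scope R_scope.

Section Closed.
Variables (theta : R) (k : nat).
Hypothesis Ht : 1 < theta.
Hypothesis Hk : (0 < k)%coq_nat.

Let q m := qint m theta.

Lemma q_eq m : q m = (theta ^ m - 1) / (theta - 1).
Proof.
have := qint_closed theta m; rewrite /q => E.
apply (Rmult_eq_reg_l (theta - 1)); last lra.
rewrite E; field; lra.
Qed.

Lemma pow_gt1 m : (0 < m)%coq_nat -> 1 < theta ^ m.
Proof. move=> Hm; apply: Rlt_pow_R1 => //. Qed.

Lemma q_pos m : (0 < m)%coq_nat -> 0 < q m.
Proof.
move=> Hm; rewrite q_eq; have := pow_gt1 Hm => H.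
apply: Rdiv_lt_0_compat; lra.
Qed.

Lemma qf_pos N : 0 < qfact N theta.
Proof.
elim: N => [|N IH]; first by rewrite -Fs_qfact Fs0; lra.
rewrite -Fs_qfact Fs_rec Fs_qfact; apply: Rmult_lt_0_compat => //.
apply: q_pos; lia.
Qed.

Definition pp n := Zs theta (k + n) k / qfact (k + n) theta.
Definition ww n := W (k + n) k theta / qfact (k + n) theta.

Lemma qf_S N : qfact N.+1 theta = q N.+1 * qfact N theta.
Proof. by rewrite -!Fs_qfact Fs_rec. Qed.

Lemma pp_closed n : pp n = theta ^ n * (theta ^ k - 1) / (theta ^ (k + n) - 1).
Proof.
have Hy : 1 < theta ^ k by apply: pow_gt1.
elim: n => [|n IH].
  rewrite /pp addn0 Zs_base Fs_qfact /=; field.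
  have := qf_pos k; split; lra.
have Hx : 1 < theta ^ (k + n) by apply: pow_gt1; lia.
have HF := qf_pos (k + n).
rewrite /pp addnS Zs_rec; last by apply/leP; lia.
rewrite qf_S.
have Hq : qint (k + n).+1 theta = (theta ^ (k + n).+1 - 1) / (theta - 1) := q_eq _.
rewrite /q Hq.
have -> : Zs theta (k + n) k = pp n * qfact (k + n) theta.
  rewrite /pp; field; lra.
rewrite IH /=.
field; repeat split; nra.
Qed.
Definition ff (i : nat) := / (theta ^ (k + i)%coq_nat - 1).
Definition TT (n : nat) := match n with O => 0 | S m => sum_f_R0 ff m end.

Lemma TT_S n : TT (S n) = TT n + ff n.
Proof. by case: n => [|n] /=; lra. Qed.

Lemma ww_closed n : ww n = pp n * ((theta - 1) / theta) * TT n.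
Proof.
have Hy : 1 < theta ^ k by apply: pow_gt1.
elim: n => [|n IH].
  rewrite /ww addn0 W_base /=; field; have := qf_pos k; lra.
have Hx : 1 < theta ^ (k + n) by apply: pow_gt1; lia.
have HF := qf_pos (k + n).
rewrite /ww addnS W_rec; last by apply/leP; lia.
rewrite qf_S.
have Hq : qint (k + n).+1 theta = (theta ^ (k + n).+1 - 1) / (theta - 1) := q_eq _.
rewrite /q Hq.
have -> : Zs theta (k + n) k = pp n * qfact (k + n) theta.
  rewrite /pp; field; lra.
have -> : W (k + n) k theta = ww n * qfact (k + n) theta.
  rewrite /ww; field; lra.
rewrite IH TT_S !pp_closed /ff /=.
have -> : (k + n)%coq_nat = (k + n)%N by [].
have -> : (k + n.+1)%N = (k + n).+1 by rewrite addnS.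
rewrite /=.
field; repeat split; nra.
Qed.
End Closed.

Lemma winprob_closed (theta : R) (k n : nat) : 1 < theta -> (0 < k)%coq_nat ->
  winprob (k + S n)%coq_nat k theta =
  theta ^ (S n) * (theta ^ k - 1) / (theta ^ (k + S n)%coq_nat - 1) * ((theta - 1) / theta) *
  sum_f_R0 (fun i => / (theta ^ (k + i)%coq_nat - 1)) n.
Proof.
move=> Ht Hk; have := ww_closed Ht Hk (S n); rewrite pp_closed //.
Qed.

End Comb.

Unset Implicit Arguments.
Open Scope R_scope.


Section An.
Variable theta : R.
Hypothesis Ht : 1 < theta.

Lemma cv_const c : Un_cv (fun _ => c) c.
Proof. intros eps He; exists 0%nat; intros; rewrite Rdist_eq; lra. Qed.

Lemma pgt1 m : (0 < m)%nat -> 1 < theta ^ m.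
Proof. intros; apply Rlt_pow_R1; auto. Qed.

Lemma ithpos : 0 < / theta. Proof. apply Rinv_0_lt_compat; lra. Qed.
Lemma ithlt1 : / theta < 1.
Proof. rewrite <- Rinv_1; apply Rinv_lt_contravar; lra. Qed.

Lemma geo_cv0 : Un_cv (fun n => (/ theta) ^ n) 0.
Proof.
intros eps He. destruct (pow_lt_1_zero (/ theta)) with (y := eps) as [N HN]; auto.
- rewrite Rabs_right; [apply ithlt1| left; apply ithpos].
- exists N; intros n Hn; unfold Rdist; rewrite Rminus_0_r; auto.
Qed.

Definition fk (k i : nat) := / (theta ^ (k + i) - 1).
Definition Bk (k i : nat) := / (theta ^ k - 1) * (/ theta) ^ i.

Lemma fk_bound k i : (0 < k)%nat -> 0 <= fk k i <= Bk k i.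
Proof.
intros Hk. unfold fk, Bk.
assert (Hy := pgt1 k Hk).
assert (Hx : 1 <= theta ^ i) by (apply pow_R1_Rle; lra).
rewrite pow_add.
split.
- left; apply Rinv_0_lt_compat; nra.
- rewrite pow_inv, <- Rinv_mult. apply Rinv_le_contravar; nra.
Qed.

Lemma geo_sum k : Un_cv (fun N => sum_f_R0 (Bk k) N) (/ (theta ^ k - 1) * / (1 - / theta)).
Proof.
apply Un_cv_ext with (fun N => / (theta ^ k - 1) * sum_f_R0 (fun n => 1 * (/ theta) ^ n) N).
- intros N; unfold Bk; rewrite scal_sum; apply sum_eq; intros; ring.
- apply CV_mult; [apply cv_const|].
  apply (GP_infinite (/ theta)). rewrite Rabs_right; [apply ithlt1| left; apply ithpos].
Qed.

Lemma series_exists k : (0 < k)%nat -> {l | Un_cv (fun N => sum_f_R0 (fk k) N) l}.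
Proof.
intros Hk; apply Rseries_CV_comp with (Bk k).
- intros; apply fk_bound; auto.
- exists (/ (theta ^ k - 1) * / (1 - / theta)); apply geo_sum.
Qed.

Definition Sk (k : nat) : R :=
  match k with O => 0 | S k' => proj1_sig (series_exists (S k') (Nat.lt_0_succ k')) end.

Definition L (k : nat) := (theta - 1) * ((theta ^ k - 1) / theta ^ (k + 1)) * Sk k.

Lemma Sk_cv k : (0 < k)%nat -> Un_cv (fun N => sum_f_R0 (fk k) N) (Sk k).
Proof. intros Hk; destruct k as [|k']; [lia|]; simpl; apply proj2_sig. Qed.

Lemma Sk_pos k : (0 < k)%nat -> 0 < Sk k.
Proof.
intros Hk.
assert (H0 : 0 < fk k 0).
{ unfold fk; rewrite Nat.add_0_r; apply Rinv_0_lt_compat; assert (H := pgt1 k Hk); lra. }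
apply Rlt_le_trans with (fk k 0); auto.
apply Rle_cv_lim with (fun _ => fk k 0) (fun N => sum_f_R0 (fk k) N); [|apply cv_const|apply Sk_cv; auto].
intros n; induction n as [|n IH]; simpl; [lra|].
assert (H := fk_bound k (S n) Hk); lra.
Qed.

Lemma Sk_le k : (0 < k)%nat -> Sk k <= / (theta ^ k - 1) * / (1 - / theta).
Proof.
intros Hk.
apply Rle_cv_lim with (fun N => sum_f_R0 (fk k) N) (fun N => sum_f_R0 (Bk k) N);
  [|apply Sk_cv; auto|apply geo_sum].
intros n; apply sum_Rle; intros; apply fk_bound; auto.
Qed.

Lemma L_bounds k : 0 <= L k <= (/ theta) ^ k.
Proof.
destruct k as [|k'].
- unfold L; simpl; lra.
- assert (Hk : (0 < S k')%nat) by lia.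
  set (k := S k') in *.
  assert (Hy := pgt1 k Hk).
  assert (HS := Sk_pos k Hk). assert (HS2 := Sk_le k Hk).
  assert (Hp : 0 < theta ^ k) by lra.
  unfold L; rewrite pow_add, pow_1, pow_inv.
  split.
  + apply Rmult_le_pos; [|lra]. apply Rmult_le_pos; [lra|].
    left; apply Rdiv_lt_0_compat; nra.
  + apply Rle_trans with ((theta - 1) * ((theta ^ k - 1) / (theta ^ k * theta)) *
       (/ (theta ^ k - 1) * / (1 - / theta))).
    * apply Rmult_le_compat_l; auto. apply Rmult_le_pos; [lra|].
      left; apply Rdiv_lt_0_compat; nra.
    * right; field; repeat split; lra.
Qed.

Lemma L_pos k : (0 < k)%nat -> 0 < L k.
Proof.
intros Hk; assert (Hy := pgt1 k Hk); assert (HS := Sk_pos k Hk).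
unfold L; apply Rmult_lt_0_compat; auto.
apply Rmult_lt_0_compat; [lra|]. apply Rdiv_lt_0_compat; [lra|]. apply pow_lt; lra.
Qed.

Lemma L_cv0 : Un_cv L 0.
Proof.
intros eps He. destruct (geo_cv0 eps He) as [N HN].
exists N; intros n Hn. specialize (HN n Hn). unfold Rdist in *.
rewrite Rminus_0_r in *. assert (H := L_bounds n).
assert (0 <= (/theta)^n) by (apply pow_le; left; apply ithpos).
rewrite Rabs_right in *; lra.
Qed.
Lemma A_cv k : (0 < k)%nat ->
  Un_cv (fun n => theta ^ (S n) * (theta ^ k - 1) / (theta ^ (k + S n) - 1)) ((theta ^ k - 1) / theta ^ k).
Proof.
intros Hk. assert (Ha := pgt1 k Hk).
set (g := (fct_cte (theta ^ k - 1) / (fct_cte (theta ^ k) - id))%F).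
assert (Hc : continuity_pt g 0).
{ unfold g; apply continuity_pt_div.
  - apply continuity_pt_const; intros a b; reflexivity.
  - apply continuity_pt_minus; [apply continuity_pt_const; intros a b; reflexivity|].
    apply derivable_continuous_pt; apply derivable_pt_id.
  - unfold minus_fct, fct_cte, id; lra. }
assert (Hy : Un_cv (fun n => (/ theta) ^ (S n)) 0).
{ apply Un_cv_ext with (fun n => (/ theta) ^ (n + 1)).
  - intros n; f_equal; lia.
  - apply (CV_shift' (fun n => (/ theta) ^ n) 1 0); apply geo_cv0. }
assert (H := continuity_seq g _ 0 Hc Hy).
replace ((theta ^ k - 1) / theta ^ k) with (g 0)
  by (unfold g, div_fct, minus_fct, fct_cte, id; f_equal; ring).
apply Un_cv_ext with (fun n => g ((/ theta) ^ S n)); auto.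
intros n. unfold g, div_fct, minus_fct, fct_cte, id.
assert (Hb := pgt1 (S n) (Nat.lt_0_succ n)).
assert (H0 : / theta ^ S n < 1).
{ assert (Hi : / theta ^ S n < / 1) by (apply Rinv_lt_contravar; lra). rewrite Rinv_1 in Hi; exact Hi. }
rewrite pow_add, pow_inv.
field; repeat split; nra.
Qed.

Lemma winprob_cv k : (0 < k)%nat -> Un_cv (fun N => winprob N k theta) (L k).
Proof.
intros Hk. apply CV_shift with (k := S k).
apply Un_cv_ext with (fun n => theta ^ (S n) * (theta ^ k - 1) / (theta ^ (k + S n) - 1) * ((theta - 1) / theta) * sum_f_R0 (fk k) n).
- intros n. replace (n + S k)%nat with (k + S n)%nat by lia.
  symmetry; apply Comb.winprob_closed; auto.
- replace (L k) with ((theta ^ k - 1) / theta ^ k * ((theta - 1) / theta) * Sk k).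
  + apply CV_mult; [apply CV_mult; [apply A_cv; auto|apply cv_const]|apply Sk_cv; auto].
  + unfold L. rewrite pow_add, pow_1. assert (Ha := pgt1 k Hk). field; lra.
Qed.

Lemma L_finmax M : exists k0, (1 <= k0 <= S M)%nat /\ forall k, (1 <= k <= S M)%nat -> L k <= L k0.
Proof.
induction M as [|M [k0 [Hk0 IH]]].
- exists 1%nat; split; [lia|]; intros k Hk; replace k with 1%nat by lia; lra.
- destruct (Rle_dec (L (S (S M))) (L k0)) as [Hle|Hgt].
  + exists k0; split; [lia|]; intros k Hk.
    destruct (Nat.eq_dec k (S (S M))) as [->|Hne]; auto. apply IH; lia.
  + exists (S (S M)); split; [lia|]; intros k Hk.
    destruct (Nat.eq_dec k (S (S M))) as [->|Hne]; [lra|].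
    apply Rle_trans with (L k0); [apply IH; lia|lra].
Qed.

Lemma L_max : exists k0, (1 <= k0)%nat /\ forall k, (1 <= k)%nat -> L k <= L k0.
Proof.
assert (H1 := L_pos 1 (Nat.lt_0_succ 0)).
destruct (geo_cv0 (L 1) H1) as [N HN].
destruct (L_finmax N) as [k0 [Hk0 Hmax]].
exists k0; split; [lia|]; intros k Hk.
destruct (Compare_dec.le_lt_dec k (S N)) as [Hle|Hlt]; [apply Hmax; lia|].
assert (Hb := L_bounds k). specialize (HN k ltac:(lia)).
unfold Rdist in HN; rewrite Rminus_0_r in HN.
assert (0 <= (/theta)^k) by (apply pow_le; left; apply ithpos).
rewrite Rabs_right in HN by lra.
assert (L 1 <= L k0) by (apply Hmax; lia). lra.
Qed.
End An.

Theorem corollary6p6 (theta : R) (Htheta : 1 < theta) :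
  exists L : nat -> R,
    (forall k : nat, (1 <= k)%nat ->
       (exists S : R,
          infinite_sum (fun i : nat => / (theta ^ (k + i) - 1)) S /\
          L k = (theta - 1) * ((theta ^ k - 1) / theta ^ (k + 1)) * S) /\
       Un_cv (fun N : nat => winprob N k theta) (L k) /\
       0 < L k) /\
    Un_cv L 0 /\
    (exists k0 : nat, (1 <= k0)%nat /\
       forall k : nat, (1 <= k)%nat -> L k <= L k0).
Proof.
exists (L theta Htheta). split; [|split].
- intros k Hk. split; [|split].
  + exists (Sk theta Htheta k); split; [|reflexivity].
    apply (Sk_cv theta Htheta k); lia.
  + apply winprob_cv; auto.
  + apply L_pos; auto.
- apply L_cv0; auto.
- apply L_max; auto.
Qed.
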